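(* Let $R$ be a tournament on $[n]$. Then there is a positive integer $M$ such that for every integer $N\ge M$ there exists a regular $n$ partition $\mathcal A=\{A_1,\dots,A_n\}$ of $[Nn]$ with $R[\mathcal A]=R$; that is, for $i,j\in[n]$, $A_i\to A_j$ if and only if $(i,j)\in R$.
   Context: A tournament on $[n]$ is $R\subset[n]\times[n]$ with no diagonal pairs and exactly one of $(i,j),(j,i)$ for each distinct $i,j$. A regular $n$ partition of $[Nn]=\{1,\dots,Nn\}$ is a partition $\{A_1,\dots,A_n\}$ into $n$ disjoint sets each of cardinality $N$. For such a partition, $R[\mathcal A]=\{(i,j)\in[n]\times[n]: |\{(a,b)\in A_i\times A_j:a>b\}|>N^2/2\}$, and $A_i\to A_j$ means $(i,j)\in R[\mathcal A]$. *)

(* Defs.v *)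
From mathcomp Require Import all_boot.
Set Implicit Arguments. Unset Strict Implicit. Unset Printing Implicit Defensive.

(* [n] is modelled by 'I_n = {0,...,n-1}; [Nn] by 'I_(N*n) (shift by one,
   which preserves the order used in R[A]). *)

Definition is_tournament (n : nat) (R : rel 'I_n) : Prop :=
  (forall i, ~~ R i i) /\
  (forall i j, i != j -> (R i j && ~~ R j i) || (R j i && ~~ R i j)).

Definition regular_partition (N n : nat) (A : 'I_n -> {set 'I_(N * n)}) : Prop :=
  (forall i, #|A i| = N) /\
  (forall i j, i != j -> [disjoint A i & A j]) /\
  (forall x : 'I_(N * n), exists i, x \in A i).

Definition above_count (N n : nat) (A : 'I_n -> {set 'I_(N * n)}) (i j : 'I_n) : nat :=
  #|[set p : 'I_(N * n) * 'I_(N * n) | (p.1 \in A i) && (p.2 \in A j) && (p.2 < p.1)]|.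

Definition induced_rel (N n : nat) (A : 'I_n -> {set 'I_(N * n)}) : rel 'I_n :=
  fun i j => N ^ 2 < 2 * above_count A i j.

(* Main.v *)
Require Import Defs.
From mathcomp Require Import all_boot zify.
Set Implicit Arguments. Unset Strict Implicit. Unset Printing Implicit Defensive.

Section Cnt.
Variable T : eqType.

Fixpoint cnt (i j : T) (w : seq T) : nat :=
  match w with [::] => 0 | x :: w' => (x == j) * count_mem i w' + cnt i j w' end.

Lemma cnt_cat i j u v :
  cnt i j (u ++ v) = cnt i j u + cnt i j v + count_mem i v * count_mem j u.
Proof.
elim: u => [|x u IH] /=; first by rewrite muln0 addn0.
rewrite IH count_cat; case: (x == j) => /=; lia.
Qed.

Lemma cnt_rev i j w : cnt i j (rev w) = cnt j i w.
Proof.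
elim: w => [|x w IH] //=.
rewrite rev_cons -cats1 cnt_cat IH /= count_rev; case: (x == i) => /=; lia.
Qed.

Lemma cnt_sym i j u : cnt i j (u ++ rev u) = cnt j i (u ++ rev u).
Proof. rewrite !cnt_cat !cnt_rev !count_rev; lia. Qed.

Lemma cnt_pair i j w : i != j ->
  cnt i j w + cnt j i w = count_mem i w * count_mem j w.
Proof.
move=> ij; elim: w => [|x w IH] //=.
case: (eqVneq x i) => [?|xi]; first by subst x; rewrite (negbTE ij) /=; lia.
case: (eqVneq x j) => [?|xj] /=; lia.
Qed.

Lemma cnt_diag i w : 2 * cnt i i w + count_mem i w = count_mem i w ^ 2.
Proof.
elim: w => [|x w IH] //=; case: (x == i) => /=; lia.
Qed.

Lemma cnt_swap i j w a b :
  cnt i j (w ++ [:: b; a]) + (a == j) * (b == i) =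
  cnt i j (w ++ [:: a; b]) + (b == j) * (a == i).
Proof.
rewrite !cnt_cat /= !addn0 !muln0 !addn0.
case: (a == i); case: (b == i); case: (a == j); case: (b == j) => /=; lia.
Qed.

Definition bal (w : seq T) := forall x y, count_mem x w = count_mem y w.

Lemma cnt_nseq i j k w : cnt i j w = cnt j i w -> bal w ->
  cnt i j (flatten (nseq k w)) = cnt j i (flatten (nseq k w)).
Proof.
move=> H B; elim: k => [|k IH] //=.
rewrite !cnt_cat IH H !count_flatten.
have -> : count_mem i w = count_mem j w by apply: B.
have -> : sumn [seq count_mem i x | x <- nseq k w] = sumn [seq count_mem j x | x <- nseq k w].
  by elim: k {IH} => //= k ->; rewrite (B i j).
lia.
Qed.

Lemma count_nseq_flat (x : T) k (w : seq T) : count_mem x (flatten (nseq k w)) = k * count_mem x w.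
Proof. elim: k => //= k IH; rewrite count_cat IH; lia. Qed.

End Cnt.

Section Link.
Variable T : eqType.

Lemma sum_nth_count (x0 : T) w i :
  \sum_(0 <= x < size w) (nth x0 w x == i) = count_mem i w.
Proof.
elim: w => [|a w IH]; first by rewrite big_geq.
by rewrite /= big_nat_recl //= IH.
Qed.

Lemma sum_pairs (x0 : T) w i j :
  \sum_(0 <= x < size w) \sum_(0 <= y < size w)
     ((nth x0 w x == i) && (nth x0 w y == j) && (y < x)) = cnt i j w.
Proof.
elim: w => [|a w IH]; first by rewrite big_geq.
rewrite /= big_nat_recl //= big1_seq ?add0n; last first.
  by move=> y _; rewrite ltn0 andbF.
under eq_bigr => x _ do rewrite big_nat_recl //=.
under eq_bigr => x _ do under eq_bigr => y _ do rewrite ltnS.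
rewrite big_split /= IH; congr (_ + _).
rewrite -(sum_nth_count x0) big_distrr /=.
by apply: eq_bigr => x _; rewrite andbT; case: (a == j); case: (_ == i).
Qed.

Lemma card_link L (w : seq T) x0 i : size w = L ->
  #|[set x : 'I_L | nth x0 w x == i]| = count_mem i w.
Proof.
move=> HL; subst L; rewrite -sum1_card big_mkcond /=.
rewrite -(sum_nth_count x0) big_mkord; apply: eq_bigr => x _.
by rewrite inE; case: ifP.
Qed.

Lemma card_pairs L (w : seq T) x0 i j : size w = L ->
  #|[set p : 'I_L * 'I_L | (p.1 \in [set x : 'I_L | nth x0 w x == i])
       && (p.2 \in [set x : 'I_L | nth x0 w x == j]) && (p.2 < p.1)]| = cnt i j w.
Proof.
move=> HL; subst L; rewrite -sum1_card big_mkcond /=.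
transitivity (\sum_(x < size w) \sum_(y < size w)
   ((nth x0 w x == i) && (nth x0 w y == j) && (y < x) : nat)).
  rewrite pair_big /=; apply: eq_bigr => p _.
  by rewrite !inE; case: ifP.
rewrite -(sum_pairs x0) big_mkord; apply: eq_bigr => x _.
by rewrite big_mkord.
Qed.

End Link.

Section Gad.
Variable n : nat.
Definition E := enum 'I_n.
Definition rest (a b : 'I_n) := [seq x <- E | (x != a) && (x != b)].
Definition gad (a b : 'I_n) := ((b :: a :: rest a b) ++ rev (rest a b)) ++ [:: b; a].

Arguments gad : simpl never.

Lemma count_E x : count_mem x E = 1.
Proof. by rewrite count_uniq_mem ?enum_uniq // mem_enum. Qed.

Lemma count_rest a b x : count_mem x (rest a b) = (x != a) && (x != b).
Proof.
rewrite count_uniq_mem; first by rewrite /rest mem_filter /E mem_enum andbT.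
by rewrite /rest filter_uniq // /E enum_uniq.
Qed.

Lemma count_gad a b x : a != b -> count_mem x (gad a b) = 2.
Proof.
move=> ab; rewrite /gad !count_cat /= count_rev count_rest.
case: (eqVneq a x) => [?|ax]; first by subst x; rewrite eq_sym (negbTE ab) /=.
case: (eqVneq b x) => [?|bx]; first by subst x.
by [].
Qed.

Lemma cnt_gad a b i j :
  cnt i j (gad a b) + 2 * ((a == j) * (b == i)) =
  cnt j i (gad a b) + 2 * ((a == i) * (b == j)).
Proof.
set u := b :: a :: rest a b.
have Hr : rev u = rev (rest a b) ++ [:: a; b].
  by rewrite /u !rev_cons -!cats1 -catA.
have S := cnt_sym i j u.
rewrite Hr catA in S.
have H1 := cnt_swap i j (u ++ rev (rest a b)) a b.
have H2 := cnt_swap j i (u ++ rev (rest a b)) a b.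
rewrite /gad -/u.
move: H1 H2 S; rewrite [(b == j) * _]mulnC [(b == i) * _]mulnC.
set w1 := ((u ++ rev (rest a b)) ++ [:: b; a]).
set w2 := ((u ++ rev (rest a b)) ++ [:: a; b]).
generalize ((a == j) * (b == i)) ((a == i) * (b == j)) (cnt i j w1) (cnt j i w1) (cnt i j w2) (cnt j i w2); lia.
Qed.

Definition G (s : seq ('I_n * 'I_n)) := flatten [seq gad p.1 p.2 | p <- s].

Lemma G_prop s : all (fun p => p.1 != p.2) s ->
  (forall x, count_mem x (G s) = 2 * size s) /\
  (forall i j, cnt i j (G s) + 2 * count_mem (j, i) s =
               cnt j i (G s) + 2 * count_mem (i, j) s).
Proof.
elim: s => [|[a b] s IH]; first by [].
move=> /andP[ab0 /IH [C1 C2]]; have ab : a != b := ab0; clear ab0.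
have -> : G ((a, b) :: s) = gad a b ++ G s by [].
have -> : size ((a, b) :: s) = (size s).+1 by [].
split.
  by move=> x; rewrite count_cat count_gad // C1; lia.
move=> i j; rewrite (cnt_cat i j (gad a b)) (cnt_cat j i (gad a b)) !C1 !count_gad //.
have := C2 i j; have := cnt_gad a b i j.
have Hc : forall p, count_mem p ((a, b) :: s) = ((a, b) == p) + count_mem p s by [].
rewrite !Hc !xpair_eqE -!mulnb [(a == j) * _]mulnC [(a == i) * _]mulnC.
generalize ((a == j) * (b == i)) ((a == i) * (b == j)) (cnt i j (G s)) (cnt j i (G s)) (cnt i j (gad a b)) (cnt j i (gad a b)); lia.
Qed.

End Gad.

Lemma size_count_sum (T : finType) (w : seq T) :
  size w = \sum_(x : T) count_mem x w.
Proof.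
elim: w => [|a w IH]; first by rewrite big1.
have -> : size (a :: w) = 1 + size w by [].
have H : forall x, count_mem x (a :: w) = (a == x) + count_mem x w by [].
under eq_bigr => x _ do rewrite H.
rewrite big_split /= IH; congr (_ + _).
rewrite (bigD1 a) //= eqxx big1 // => y ya; by rewrite eq_sym (negbTE ya).
Qed.

Theorem theorem6p1 (n : nat) (R : rel 'I_n) :
  is_tournament R ->
  exists M : nat, 0 < M /\
    forall N : nat, M <= N ->
      exists A : 'I_n -> {set 'I_(N * n)},
        regular_partition A /\ (forall i j : 'I_n, induced_rel A i j = R i j).
Proof.
case: n R => [|n] R [Hirr Htour].
  exists 1; split => // N _; exists (fun _ => set0); split; last by case.
  split; first by case.
  split; first by case.
  by move=> x; exfalso; move: (ltn_ord x); move: (nat_of_ord x) => y; rewrite muln0.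
pose s := [seq p <- enum {: 'I_n.+1 * 'I_n.+1} | R p.1 p.2].
pose m := size s.
exists (2 * m).+1; split => // N HN.
pose k := (N - 2 * m) %/ 2; pose e := (N - 2 * m) %% 2.
pose P := flatten (nseq k (E n.+1 ++ rev (E n.+1))).
pose Q := flatten (nseq e (E n.+1)).
pose W := G s ++ (P ++ Q).
have hall : all (fun p => p.1 != p.2) s.
  apply/allP => p; rewrite mem_filter => /andP[Rp _].
  apply/negP => /eqP Heq; move: Rp; rewrite Heq; by rewrite (negbTE (Hirr _)).
have [C1 C2] := G_prop hall.
have cP : forall x, count_mem x P = k * 2.
  by move=> x; rewrite count_nseq_flat count_cat count_rev count_E.
have cQ : forall x, count_mem x Q = e.
  by move=> x; rewrite count_nseq_flat count_E muln1.
have cW : forall x, count_mem x W = N.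
  move=> x; rewrite !count_cat C1 cP cQ; move: HN; rewrite /k /e /m -divn_eq => H; rewrite subnKC //; exact: ltnW.
have sW : size W = N * n.+1.
  rewrite size_count_sum; under eq_bigr => x _ do rewrite cW.
  by rewrite sum_nat_const card_ord mulnC.
have hs : forall i j, count_mem (i, j) s = R i j.
  move=> i j; rewrite count_uniq_mem; last by rewrite filter_uniq // enum_uniq.
  by rewrite mem_filter mem_enum andbT.
exists (fun i => [set x : 'I_(N * n.+1) | nth ord0 W x == i]); split.
  split; first by move=> i; rewrite card_link // cW.
  split.
    move=> i j ij; apply/pred0P => x /=; rewrite !inE.
    apply/negbTE/andP => -[/eqP H1 /eqP H2].
    by move/eqP: ij; apply; rewrite -H1 -H2.
  by move=> x; exists (nth ord0 W x); rewrite inE.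
move=> i j; rewrite /induced_rel /above_count /= card_pairs //.
case: (eqVneq i j) => [<-|ij].
  have := cnt_diag i W; rewrite cW (negbTE (Hirr i)).
  move=> H; apply/negbTE; rewrite -leqNgt; lia.
have hp : cnt i j W + cnt j i W = count_mem i W * count_mem j W := cnt_pair W ij.
rewrite !cW in hp.
have hq : cnt i j Q + cnt j i Q = count_mem i Q * count_mem j Q := cnt_pair Q ij.
rewrite !cQ in hq.
have he : e < 2 by rewrite /e ltn_mod.
have hP : cnt i j P = cnt j i P.
  apply: cnt_nseq; first exact: cnt_sym.
  by move=> x y; rewrite !count_cat !count_rev !count_E.
have hG := C2 i j; rewrite !hs in hG.
have E1 := cnt_cat i j (G s) (P ++ Q).
have E2 := cnt_cat j i (G s) (P ++ Q).
have E3 := cnt_cat i j P Q.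
have E4 := cnt_cat j i P Q.
rewrite !count_cat !C1 !cP !cQ in E1 E2 E3 E4.
have := Htour i j ij.
rewrite -/W in E1 E2.
have hee : e * e <= 1 by move: he; case: (e) => [|[|]].
move: hp hq hG E1 E2 E3 E4 hee hP; rewrite -mulnn.
move=> hp hq hG E1 E2 E3 E4 hee hP.
move: E1 E2 => /eqP E1 /eqP E2.
rewrite -(eqn_add2r (cnt j i (G s) + cnt j i (P ++ Q))) in E1.
rewrite -(eqn_add2r (cnt i j (G s) + cnt i j (P ++ Q))) in E2.
have {E1 E2} E12 : cnt i j W + (cnt j i (G s) + cnt j i (P ++ Q)) = cnt j i W + (cnt i j (G s) + cnt i j (P ++ Q)).
  apply/eqP; move: E1 E2 => /eqP -> /eqP ->; apply/eqP; lia.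
move: hp hq hG E12 E3 E4 hee hP.
generalize (N * N) (e * e) (cnt i j W) (cnt j i W) (e * (k * 2)).
case: (R i j); case: (R j i) => //= NN ee c1 c2 Y hp hq hG E1 E3 E4 hee hP _.
  apply/idP; lia.
apply/negbTE; rewrite -leqNgt; lia.
Qed.
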